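(* Let $A\in\mathbb{R}^{m\times N}$ with $N=pn$, let $\mathbf{x}\in\mathbb{R}^N$ be arbitrary, let $k\in\{1,\dots,p\}$, let $\phi_k(\mathbf{x})=\inf_{\mathbf{z}\in\mathbb{R}^N,\lVert\mathbf{z}\rVert_{2,0}=k}\lVert\mathbf{x}-\mathbf{z}\rVert_{2,1}$, and let $\mathbf{y}=A\mathbf{x}+\boldsymbol{\epsilon}$. For any $q\in(1,\infty]$: 1) If $\lVert\boldsymbol{\epsilon}\rVert_2\le\zeta$, then the solution $\hat{\mathbf{x}}$ of the block basis pursuit $\min_{\mathbf{z}}\lVert\mathbf{z}\rVert_{2,1}$ s.t. $\lVert\mathbf{y}-A\mathbf{z}\rVert_2\le\zeta$ obeys $$\lVert\hat{\mathbf{x}}-\mathbf{x}\rVert_{2,q}\le\frac{2\zeta}{\beta_{q,4^{\frac{q}{q-1}}k}(A)}+k^{1/q-1}\phi_k(\mathbf{x}),\qquad \lVert\hat{\mathbf{x}}-\mathbf{x}\rVert_{2,1}\le\frac{4k^{1-1/q}\zeta}{\beta_{q,4^{\frac{q}{q-1}}k}(A)}+4\phi_k(\mathbf{x}).$$ 2) If $\lVert A^T\boldsymbol{\epsilon}\rVert_{2,\infty}\le\mu$, then the solution $\hat{\mathbf{x}}$ of the block Dantzig selector $\min_{\mathbf{z}}\lVert\mathbf{z}\rVert_{2,1}$ s.t. $\lVert A^T(\mathbf{y}-A\mathbf{z})\rVert_{2,\infty}\le\mu$ obeys $$\lVert\hat{\mathbf{x}}-\mathbf{x}\rVert_{2,q}\le\frac{8k^{1-1/q}}{\beta^2_{q,4^{\frac{q}{q-1}}k}(A)}\mu+k^{1/q-1}\phi_k(\mathbf{x}),\qquad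 \lVert\hat{\mathbf{x}}-\mathbf{x}\rVert_{2,1}\le\frac{16k^{2-2/q}}{\beta^2_{q,4^{\frac{q}{q-1}}k}(A)}\mu+4\phi_k(\mathbf{x}).$$ 3) If $\lVert A^T\boldsymbol{\epsilon}\rVert_{2,\infty}\le\kappa\mu$ for some $\kappa\in(0,1)$, then the solution $\hat{\mathbf{x}}$ of the group lasso $\min_{\mathbf{z}}\frac12\lVert\mathbf{y}-A\mathbf{z}\rVert_2^2+\mu\lVert\mathbf{z}\rVert_{2,1}$ obeys $$\lVert\hat{\mathbf{x}}-\mathbf{x}\rVert_{2,q}\le\frac{1+\kappa}{1-\kappa}\cdot\frac{4k^{1-1/q}}{\beta^2_{q,(\frac{4}{1-\kappa})^{\frac{q}{q-1}}k}(A)}\mu+k^{1/q-1}\phi_k(\mathbf{x}),$$ $$\lVert\hat{\mathbf{x}}-\mathbf{x}\rVert_{2,1}\le\frac{1+\kappa}{(1-\kappa)^2}\cdot\frac{8k^{2-2/q}}{\beta^2_{q,(\frac{4}{1-\kappa})^{\frac{q}{q-1}}k}(A)}\mu+\frac{4}{1-\kappa}\phi_k(\mathbf{x}).$$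
   Context: Every $\mathbf{x}\in\mathbb{R}^N$ is partitioned into $p$ consecutive blocks of length $n$: $\mathbf{x}=[\mathbf{x}_1^T,\dots,\mathbf{x}_p^T]^T$, $\mathbf{x}_i\in\mathbb{R}^n$. Mixed norms: $\lVert\mathbf{x}\rVert_{2,0}=\#\{i:\mathbf{x}_i\ne\mathbf{0}\}$, $\lVert\mathbf{x}\rVert_{2,q}=(\sum_{i=1}^p\lVert\mathbf{x}_i\rVert_2^q)^{1/q}$ for $0<q<\infty$, $\lVert\mathbf{x}\rVert_{2,\infty}=\max_i\lVert\mathbf{x}_i\rVert_2$. For nonzero $\mathbf{x}$ and $q\in(1,\infty)$, $k_q(\mathbf{x})=\left(\lVert\mathbf{x}\rVert_{2,1}/\lVert\mathbf{x}\rVert_{2,q}\right)^{q/(q-1)}$, and $k_\infty(\mathbf{x})=\lVert\mathbf{x}\rVert_{2,1}/\lVert\mathbf{x}\rVert_{2,\infty}$. For $q\in(1,\infty]$ and real $s\ge1$, $\beta_{q,s}(A)=\min_{\mathbf{z}\ne\mathbf{0},\,k_q(\mathbf{z})\le s}\lVert A\mathbf{z}\rVert_2/\lVert\mathbf{z}\rVert_{2,q}$ (the paper defines it for $s\in[1,p]$; for $s\ge p$ the constraint is vacuous since $k_q\le p$). For $q=\infty$, $q/(q-1)$ is read as $1$ and $1/q$ as $0$. The parameters $\zeta\ge0$, $\mu>0$ are given; bounds are understood as $+\infty$ when the relevant $\beta$ is $0$. *)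

(* Defs.v *)
From HB Require Import structures.
From mathcomp Require Import all_boot all_order all_algebra.
From mathcomp Require Import all_classical all_reals.
From mathcomp Require Import exp.
From mathcomp Require Import zify.
Set Implicit Arguments. Unset Strict Implicit. Unset Printing Implicit Defensive.
Import Order.TTheory GRing.Theory Num.Theory.
Local Open Scope ring_scope.

(* Index of entry j of block i in R^(p*n) : block i occupies the consecutive
   coordinates i*n, ..., i*n + n - 1. *)
Lemma bidx_lt (p n : nat) (i : 'I_p) (j : 'I_n) : (i * n + j < p * n)%N.
Proof. have := ltn_ord i; have := ltn_ord j; nia. Qed.

Definition bidx (p n : nat) (i : 'I_p) (j : 'I_n) : 'I_(p * n) :=
  Ordinal (bidx_lt i j).

Section MixedNorms.
Variables (R : realType) (p n : nat).
Implicit Types (x z : 'cV[R]_(p * n)).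

Definition blk x (i : 'I_p) : 'rV[R]_n := \row_(j < n) x (bidx i j) 0.

Definition bnorm x (i : 'I_p) : R := Num.sqrt (\sum_(j < n) x (bidx i j) 0 ^+ 2).

Definition mnorm0 x : nat := #|[pred i : 'I_p | blk x i != 0]|.

Definition mnorm1 x : R := \sum_(i < p) bnorm x i.

Definition mnorminf x : R := \big[Num.max/0]_(i < p) bnorm x i.

(* ||x||_{2,q} for q in (0,oo] (q : \bar R; q = -oo is meaningless, set to 0) *)
Definition mnorm (q : \bar R) x : R :=
  match q with
  | r%:E => powR (\sum_(i < p) powR (bnorm x i) r) r^-1
  | +oo%E => mnorminf x
  | -oo%E => 0
  end.

(* exponent q/(q-1), read as 1 when q = oo *)
Definition qcexp (q : \bar R) : R :=
  match q with r%:E => r / (r - 1) | _ => 1 end.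

(* 1/q, read as 0 when q = oo *)
Definition qinvexp (q : \bar R) : R :=
  match q with r%:E => r^-1 | _ => 0 end.

(* k_q(x) = (||x||_{2,1} / ||x||_{2,q})^(q/(q-1)); for q = oo this is
   ||x||_{2,1}/||x||_{2,oo} since powR t 1 = t for t >= 0 *)
Definition kq (q : \bar R) x : R := powR (mnorm1 x / mnorm q x) (qcexp q).

End MixedNorms.

Definition l2norm (R : realType) (m : nat) (v : 'cV[R]_m) : R :=
  Num.sqrt (\sum_(i < m) v i 0 ^+ 2).

(* beta_{q,s}(A) = min_{z <> 0, k_q(z) <= s} ||Az||_2 / ||z||_{2,q}
   (stated as an infimum; the minimum is attained) *)
Definition betaqs (R : realType) (m p n : nat) (q : \bar R) (s : R)
    (A : 'M[R]_(m, p * n)) : R :=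
  inf [set l2norm (A *m z) / mnorm q z
      | z in [set z : 'cV[R]_(p * n) | z != 0 /\ kq q z <= s]]%classic.

Definition phik (R : realType) (p n : nat) (k : nat) (x : 'cV[R]_(p * n)) : R :=
  inf [set mnorm1 (x - z) | z in [set z : 'cV[R]_(p * n) | mnorm0 z = k]]%classic.

Definition bbp_solution (R : realType) (m p n : nat) (A : 'M[R]_(m, p * n))
    (y : 'cV[R]_m) (zeta : R) (xh : 'cV[R]_(p * n)) : Prop :=
  l2norm (y - A *m xh) <= zeta /\
  forall z, l2norm (y - A *m z) <= zeta -> mnorm1 xh <= mnorm1 z.

Definition bds_solution (R : realType) (m p n : nat) (A : 'M[R]_(m, p * n))
    (y : 'cV[R]_m) (mu : R) (xh : 'cV[R]_(p * n)) : Prop :=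
  mnorminf (A^T *m (y - A *m xh)) <= mu /\
  forall z, mnorminf (A^T *m (y - A *m z)) <= mu -> mnorm1 xh <= mnorm1 z.

Definition glasso_solution (R : realType) (m p n : nat) (A : 'M[R]_(m, p * n))
    (y : 'cV[R]_m) (mu : R) (xh : 'cV[R]_(p * n)) : Prop :=
  forall z, 2^-1 * l2norm (y - A *m xh) ^+ 2 + mu * mnorm1 xh
            <= 2^-1 * l2norm (y - A *m z) ^+ 2 + mu * mnorm1 z.

(* Main.v *)
Require Import Defs.
From HB Require Import structures.
From mathcomp Require Import all_boot all_order all_algebra.
From mathcomp Require Import all_classical all_reals.
From mathcomp Require Import exp.
From mathcomp Require Import zify ring lra.
Set Implicit Arguments. Unset Strict Implicit. Unset Printing Implicit Defensive.
Import Order.TTheory GRing.Theory Num.Theory.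
Local Open Scope ring_scope.

Section S.
Variables (p n : nat).
Lemma bdiv_lt (k : 'I_(p*n)) : (k %/ n < p)%N.
Proof. move: (nat_of_ord k) (ltn_ord k) => kk h. have [n0|n0] := posnP n; first by rewrite n0 muln0 in h.
by rewrite ltn_divLR. Qed.
Lemma bmod_lt (k : 'I_(p*n)) : (k %% n < n)%N.
Proof. move: (nat_of_ord k) (ltn_ord k) => kk h. have [n0|n0] := posnP n; first by rewrite n0 muln0 in h.
by rewrite ltn_mod. Qed.

Lemma sum_blocks (R : realType) (F : 'I_(p*n) -> R) :
  \sum_k F k = \sum_(i < p) \sum_(j < n) F (bidx i j).
Proof.
rewrite pair_bigA /=.
rewrite (reindex (fun ij : 'I_p * 'I_n => bidx ij.1 ij.2)) //=.
exists (fun k => (Ordinal (bdiv_lt k), Ordinal (bmod_lt k))).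
  move=> [i j] _; congr pair; apply: val_inj => /=.
    by rewrite divnMDl ?divn_small ?addn0 //; case: j => j /=; lia.
  by rewrite modnMDl modn_small.
move=> k _; apply: val_inj => /=. by rewrite -divn_eq.
Qed.
End S.

Section Euc.
Variables (R : realType) (I : finType).
Implicit Types f g : I -> R.
Definition E f := Num.sqrt (\sum_i f i ^+ 2).

Lemma sumsq_ge0 f : 0 <= \sum_i f i ^+ 2.
Proof. by apply: sumr_ge0 => i _; rewrite sqr_ge0. Qed.

Lemma E_ge0 f : 0 <= E f. Proof. exact: sqrtr_ge0. Qed.

Lemma E_sq f : E f ^+ 2 = \sum_i f i ^+ 2.
Proof. by rewrite sqr_sqrtr // sumsq_ge0. Qed.

Lemma E_eq0 f : E f = 0 -> forall i, f i = 0.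
Proof.
move=> h i; have : \sum_i f i ^+ 2 = 0 by rewrite -E_sq h expr0n.
move/eqP; rewrite psumr_eq0 => [/allP /(_ i (mem_index_enum i))|j _]; last by rewrite sqr_ge0.
by rewrite /= sqrf_eq0 => /eqP.
Qed.

Lemma CS f g : \sum_i f i * g i <= E f * E g.
Proof.
have [a0|a0] := eqVneq (E f) 0.
  by rewrite a0 mul0r big1 // => i _; rewrite (E_eq0 a0) mul0r.
have [b0|b0] := eqVneq (E g) 0.
  by rewrite b0 mulr0 big1 // => i _; rewrite (E_eq0 b0) mulr0.
have ap : 0 < E f by rewrite lt_def a0 E_ge0.
have bp : 0 < E g by rewrite lt_def b0 E_ge0.
have key : 2 * (E f * E g) * \sum_i f i * g i <= 2 * (E f * E g) * (E f * E g).
  have T : forall i, 2 * (E f * E g) * (f i * g i) <= E g ^+ 2 * f i ^+ 2 + E f ^+ 2 * g i ^+ 2.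
    move=> i; have := sqr_ge0 (E g * f i - E f * g i); rewrite sqrrB !exprMn.
    set u := E g; set v := E f; move=> h.
    have -> : 2 * (v * u) * (f i * g i) = u * f i * (v * g i) *+ 2 by rewrite mulr2n; ring.
    lra.
  have := ler_sum (index_enum I) (P := xpredT) (fun i _ => T i).
  rewrite -mulr_sumr big_split /= -!mulr_sumr -(E_sq f) -(E_sq g).
  move=> h; apply: (le_trans h); rewrite le_eqVlt; apply/orP; left; apply/eqP; ring.
rewrite -subr_ge0 -(pmulr_rge0 _ (_ : 0 < 2 * (E f * E g))); last by rewrite mulr_gt0 // mulr_gt0.
by rewrite mulrBr subr_ge0.
Qed.

Lemma E_triangle f g : E (fun i => f i + g i) <= E f + E g.
Proof.
rewrite -(ler_pXn2r (_ : (0 < 2)%N)) ?nnegrE ?addr_ge0 ?E_ge0 //.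
rewrite E_sq sqrrD !E_sq.
have -> : \sum_i (f i + g i) ^+ 2 = \sum_i f i ^+ 2 + \sum_i g i ^+ 2 + (\sum_i f i * g i) *+ 2.
  rewrite -sumrMnl -!big_split /=; apply: eq_bigr => i _; ring.
have := CS f g; lra.
Qed.

Lemma E_scale a f : E (fun i => a * f i) = `|a| * E f.
Proof.
rewrite /E -sqrtr_sqr -sqrtrM ?sqr_ge0 // mulr_sumr; congr Num.sqrt; apply: eq_bigr => i _; ring.
Qed.

Lemma E_opp f : E (fun i => - f i) = E f.
Proof. by rewrite /E; congr Num.sqrt; apply: eq_bigr => i _; rewrite sqrrN. Qed.

End Euc.

Section Hold.
Variables (R : realType).

Lemma powRV (x r : R) : 0 <= x -> powR x^-1 r = (powR x r)^-1.
Proof. by move=> x0; rewrite -powR_inv1 // -powRrM mulN1r powRN. Qed.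

Lemma holder_sum (I : finType) (S : pred I) (b : I -> R) (r : R) :
  1 < r -> (forall i, 0 <= b i) ->
  \sum_(i in S) b i <= powR #|S|%:R (1 - r^-1) * powR (\sum_(i in S) powR (b i) r) r^-1.
Proof.
move=> r1 b0.
have r0 : 0 < r by lra.
have sumge0 : 0 <= \sum_(i in S) powR (b i) r by apply: sumr_ge0 => i _; apply: powR_ge0.
set Sig := \sum_(i in S) powR (b i) r.
set M := powR Sig r^-1.
have [M0|Mn0] := eqVneq M 0.
  have Sig0 : Sig = 0 by apply: (powR_eq0_eq0 M0).
  rewrite M0 mulr0 big1 // => i Si.
  move/eqP: Sig0; rewrite /Sig psumr_eq0; last by move=> j _; apply: powR_ge0.
  move/allP => /(_ i (mem_index_enum i)); rewrite Si /= powR_eq0 => /andP[/eqP -> _] //.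
have Mp : 0 < M by rewrite lt_def Mn0 powR_ge0.
have [K0|Kp] := posnP #|S|.
  by rewrite big_pred0 ?mulr_ge0 ?powR_ge0 // => i; apply/negbTE/negP => Si; rewrite (card0_eq K0) in Si.
set K : R := #|S|%:R.
have K0 : 0 < K by rewrite ltr0n.
set s := 1 - r^-1.
have s0 : 0 < s by rewrite subr_gt0 invf_lt1.
set c := powR K s.
have c0 : 0 < c by apply: powR_gt0.
have MrSig : powR M r = Sig by rewrite /M -powRrM mulVf ?gt_eqF // powRr1.
have Y : forall i, b i * M^-1 * c^-1 <= powR (b i) r * Sig^-1 / r + K^-1 / s^-1.
  move=> i.
  have rs : r^-1 + s^-1^-1 = 1 by rewrite invrK /s; ring.
  have Mi : 0 <= M^-1 by rewrite invr_ge0 ltW.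
  have ci : 0 <= c^-1 by rewrite invr_ge0 ltW.
  have si : 0 < s^-1 by rewrite invr_gt0.
  have := @conjugate_powR R (b i * M^-1) c^-1 r s^-1 (mulr_ge0 (b0 i) Mi) ci r0 si rs.
  rewrite powRM ?(b0 i) ?invr_ge0 ?(ltW Mp) // powRV ?(ltW Mp) // MrSig.
  by rewrite powRV ?(ltW c0) // -powRrM mulfV ?gt_eqF // powRr1 ?(ltW K0).
have := ler_sum (index_enum I) (P := fun i => i \in S) (fun i _ => Y i).
rewrite big_split /= -!mulr_suml sumr_const -/Sig -/K.
have SigP : 0 < Sig.
  rewrite lt_def sumge0 andbT; apply/eqP => S0; move/eqP: Mn0; apply.
  by rewrite /M S0 powR0 // invr_eq0 gt_eqF.
rewrite mulfV ?gt_eqF // -mulr_natr -/K mulVf ?gt_eqF // invrK.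
have -> : 1 / r + 1 * s = 1 by rewrite /s; field; rewrite gt_eqF.
by rewrite -mulrA -invfM ler_pdivrMr ?mulr_gt0 // mul1r mulrC.
Qed.
End Hold.

Lemma sum_sub_le (R : realType) (I : finType) (P : pred I) (F : I -> R) :
  (forall i, 0 <= F i) -> \sum_(i | P i) F i <= \sum_i F i.
Proof.
move=> F0; rewrite [X in _ <= X](bigID P) /= lerDl; exact: sumr_ge0.
Qed.

Section Blocks.
Variables (R : realType) (p n : nat).
Implicit Types (x y z h w : 'cV[R]_(p * n)).

Lemma bnormE x i : bnorm x i = E (fun j => x (bidx i j) 0).
Proof. by []. Qed.

Lemma bnorm_ge0 x i : 0 <= bnorm x i.
Proof. exact: sqrtr_ge0. Qed.

Lemma bnormD x y i : bnorm (x + y) i <= bnorm x i + bnorm y i.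
Proof.
rewrite !bnormE; have -> : (fun j => (x + y) (bidx i j) 0) = (fun j => x (bidx i j) 0 + y (bidx i j) 0).
  by apply: funext => j; rewrite mxE.
exact: E_triangle.
Qed.

Lemma bnormZ a x i : bnorm (a *: x) i = `|a| * bnorm x i.
Proof.
rewrite !bnormE -E_scale; congr E; apply: funext => j; by rewrite mxE.
Qed.

Lemma bnormN x i : bnorm (- x) i = bnorm x i.
Proof.
rewrite /bnorm; congr Num.sqrt; apply: eq_bigr => j _; by rewrite mxE sqrrN.
Qed.

Lemma bnormB x y i : bnorm (x - y) i <= bnorm x i + bnorm y i.
Proof. by rewrite -(bnormN y); apply: bnormD. Qed.

Lemma mnorm1_ge0 x : 0 <= mnorm1 x.
Proof. by apply: sumr_ge0 => i _; apply: bnorm_ge0. Qed.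

Lemma mnorm1D x y : mnorm1 (x + y) <= mnorm1 x + mnorm1 y.
Proof. by rewrite /mnorm1 -big_split /=; apply: ler_sum => i _; apply: bnormD. Qed.

Lemma mnorm1Z a x : mnorm1 (a *: x) = `|a| * mnorm1 x.
Proof. by rewrite /mnorm1 mulr_sumr; apply: eq_bigr => i _; rewrite bnormZ. Qed.

Lemma mnorminf_ge0 x : 0 <= mnorminf x.
Proof.
rewrite /mnorminf; elim/big_ind: _ => //.
- by move=> a b a0 b0; rewrite le_max a0.
- by move=> i _; apply: bnorm_ge0.
Qed.

Lemma bnorm_le_inf x i : bnorm x i <= mnorminf x.
Proof.
rewrite /mnorminf (bigD1 i) //= le_max lexx //.
Qed.

Lemma mnorminf_le x c : 0 <= c -> (forall i, bnorm x i <= c) -> mnorminf x <= c.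
Proof.
move=> c0 h; rewrite /mnorminf; elim/big_ind: _ => //.
- by move=> a b a0 b0; rewrite ge_max a0 b0.

Qed.

Definition ip (N : nat) (u v : 'cV[R]_N) : R := \sum_k u k 0 * v k 0.

Lemma ip_blocks h w : ip h w <= mnorm1 h * mnorminf w.
Proof.
rewrite /ip sum_blocks /mnorm1 mulr_suml; apply: ler_sum => i _.
apply: (le_trans (CS (fun j => h (bidx i j) 0) (fun j => w (bidx i j) 0))).
rewrite -!bnormE ler_wpM2l ?bnorm_ge0 //; exact: bnorm_le_inf.
Qed.

End Blocks.

Section IP.
Variable (R : realType).

Lemma l2normE m (v : 'cV[R]_m) : l2norm v = E (fun i => v i 0).
Proof. by []. Qed.

Lemma l2norm_ge0 m (v : 'cV[R]_m) : 0 <= l2norm v.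
Proof. exact: sqrtr_ge0. Qed.

Lemma l2norm_sq m (v : 'cV[R]_m) : l2norm v ^+ 2 = ip v v.
Proof. by rewrite l2normE E_sq /ip; apply: eq_bigr => i _; rewrite expr2. Qed.

Lemma l2normD m (u v : 'cV[R]_m) : l2norm (u + v) <= l2norm u + l2norm v.
Proof.
rewrite !l2normE; have -> : (fun j => (u + v) j 0) = (fun j => u j 0 + v j 0).
  by apply: funext => j; rewrite mxE.
exact: E_triangle.
Qed.

Lemma l2normN m (v : 'cV[R]_m) : l2norm (- v) = l2norm v.
Proof. rewrite /l2norm; congr Num.sqrt; apply: eq_bigr => j _; by rewrite mxE sqrrN. Qed.

Lemma ipC m (u v : 'cV[R]_m) : ip u v = ip v u.
Proof. by apply: eq_bigr => i _; rewrite mulrC. Qed.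

Lemma ipDl m (u v w : 'cV[R]_m) : ip (u + v) w = ip u w + ip v w.
Proof. by rewrite /ip -big_split; apply: eq_bigr => i _; rewrite mxE mulrDl. Qed.

Lemma ipNl m (u w : 'cV[R]_m) : ip (- u) w = - ip u w.
Proof. by rewrite /ip -sumrN; apply: eq_bigr => i _; rewrite mxE mulNr. Qed.

Lemma ipZl m a (u w : 'cV[R]_m) : ip (a *: u) w = a * ip u w.
Proof. by rewrite /ip mulr_sumr; apply: eq_bigr => i _; rewrite mxE mulrA. Qed.

Lemma ipDr m (u v w : 'cV[R]_m) : ip w (u + v) = ip w u + ip w v.
Proof. by rewrite ipC ipDl !(ipC w). Qed.

Lemma ipZr m a (u w : 'cV[R]_m) : ip w (a *: u) = a * ip w u.
Proof. by rewrite ipC ipZl ipC. Qed.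

Lemma ip_mul m N (A : 'M[R]_(m, N)) (h : 'cV[R]_N) (w : 'cV[R]_m) :
  ip (A *m h) w = ip h (A^T *m w).
Proof.
rewrite /ip; under eq_bigr do rewrite mxE mulr_suml.
rewrite exchange_big /=; apply: eq_bigr => j _.
rewrite mxE mulr_sumr; apply: eq_bigr => i _; rewrite mxE; ring.
Qed.

End IP.

Section QNorm.
Variables (R : realType) (p n : nat).
Implicit Types (x y z h w : 'cV[R]_(p * n)).

Lemma bidx_surj (k0 : 'I_(p * n)) : bidx (Ordinal (bdiv_lt k0)) (Ordinal (bmod_lt k0)) = k0.
Proof. by apply: val_inj => /=; rewrite -divn_eq. Qed.

Lemma nz_block h : h != 0 -> exists i, 0 < bnorm h i.
Proof.
move=> hn0.
have [k0 hk] : exists k0, h k0 0 != 0.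
  apply/not_existsP => H; move/eqP: hn0; apply; apply/matrixP => i j.
  rewrite ord1 mxE; have := H i; by case: (h i 0 =P 0).
exists (Ordinal (bdiv_lt k0)); rewrite lt_def bnorm_ge0 andbT.
apply/eqP => /(@E_eq0 R 'I_n) /(_ (Ordinal (bmod_lt k0))).
by rewrite bidx_surj => /eqP; rewrite (negbTE hk).
Qed.

Lemma mnorm_ge0 (q : \bar R) h : 0 <= mnorm q h.
Proof. by case: q => [r||] /=; rewrite ?powR_ge0 ?mnorminf_ge0. Qed.

Lemma mnorm_gt0 (q : \bar R) h : (0 < q)%E -> h != 0 -> 0 < mnorm q h.
Proof.
move=> q0 hn0; have [i hi] := nz_block hn0.
case: q q0 => [r||] //= r0.
  rewrite lte_fin in r0.
  apply: powR_gt0; apply: (lt_le_trans (powR_gt0 r hi)).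
  rewrite (bigD1 i) //= lerDl; apply: sumr_ge0 => j _; apply: powR_ge0.
exact: (lt_le_trans hi (bnorm_le_inf h i)).
Qed.

Lemma qexp_facts (q : \bar R) : (1 < q)%E ->
  0 < qcexp q /\ (1 - qinvexp q) * qcexp q = 1 /\ 0 < 1 - qinvexp q.
Proof.
case: q => [r||] //= ; last by move=> _; split => //; split; [ring | rewrite subr0].
rewrite lte_fin => r1.
have r0 : 0 < r by lra.
have r10 : 0 < r - 1 by lra.
split; first by rewrite divr_gt0.
split; first by field; rewrite !gt_eqF.
by rewrite subr_gt0 invf_lt1.
Qed.

Lemma holder_blocks (q : \bar R) (S : pred 'I_p) h : (1 < q)%E ->
  \sum_(i in S) bnorm h i <= powR #|S|%:R (1 - qinvexp q) * mnorm q h.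
Proof.
case: q => [r||] //=; last first.
  move=> _; rewrite subr0 powRr1 // -sumr_const mulr_suml.
  by apply: ler_sum => i _; rewrite mul1r; apply: bnorm_le_inf.
rewrite lte_fin => r1.
apply: (le_trans (@holder_sum _ _ S (bnorm h) r r1 (bnorm_ge0 h))).
rewrite ler_wpM2l ?powR_ge0 //.
have r0 : 0 < r by lra.
apply: ge0_ler_powR; first by rewrite invr_ge0 ltW.
- by rewrite nnegrE; apply: sumr_ge0 => i _; apply: powR_ge0.
- by rewrite nnegrE; apply: sumr_ge0 => i _; apply: powR_ge0.
exact: (@sum_sub_le _ _ (fun i => i \in S) _ (fun i => powR_ge0 _ _)).
Qed.

Lemma kq_le (q : \bar R) (k : nat) a h : (1 < q)%E -> 0 < a -> h != 0 ->
  mnorm1 h <= a * powR k%:R (1 - qinvexp q) * mnorm q h ->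
  kq q h <= powR a (qcexp q) * k%:R.
Proof.
move=> q1 a0 hn0 hle.
have [e0 [ce s0]] := qexp_facts q1.
have t0 : 0 < mnorm q h by apply: mnorm_gt0 => //; apply: lt_trans q1.
have -> : powR a (qcexp q) * k%:R = powR (a * powR k%:R (1 - qinvexp q)) (qcexp q).
  rewrite powRM; [|exact: ltW|exact: powR_ge0].
  by rewrite -powRrM ce powRr1.
rewrite /kq; apply: ge0_ler_powR; first exact: ltW.
- by rewrite nnegrE divr_ge0 ?mnorm1_ge0 ?mnorm_ge0.
- by rewrite nnegrE mulr_ge0 ?powR_ge0 // ltW.
by rewrite ler_pdivrMr.
Qed.

End QNorm.

Section Cone.
Variables (R : realType) (p n : nat).
Implicit Types (x y z h w : 'cV[R]_(p * n)).

Lemma blk0_bnorm x z i : blk z i = 0 -> bnorm x i = bnorm (x - z) i.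
Proof.
move=> H; rewrite /bnorm; congr Num.sqrt; apply: eq_bigr => j _.
have := congr1 (fun M : 'rV[R]_n => M 0 j) H; rewrite !mxE => ->.
by rewrite subr0.
Qed.

Lemma cone x h z :
  mnorm1 x - mnorm1 (x + h) <=
  \sum_(i | blk z i != 0) bnorm h i - \sum_(i | ~~ (blk z i != 0)) bnorm h i
  + 2 * mnorm1 (x - z).
Proof.
set P := fun i => blk z i != 0.
have Hin : forall i, P i -> bnorm x i - bnorm (x + h) i <= bnorm h i.
  move=> i _; have := bnormB (x + h) h i; rewrite addrK; lra.
have Hout : forall i, ~~ P i -> bnorm x i - bnorm (x + h) i <= - bnorm h i + 2 * bnorm (x - z) i.
  move=> i /negPn /eqP Hz; have := bnormB (x + h) x i.
  rewrite (addrC x h) addrK -(blk0_bnorm x Hz); lra.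
rewrite /mnorm1 -sumrB (bigID P) /=.
have L : \sum_(i | ~~ P i) bnorm (x - z) i <= \sum_i bnorm (x - z) i.
  by apply: sum_sub_le => i; apply: bnorm_ge0.
have H1 := ler_sum (index_enum 'I_p) (P := P) (fun i hi => Hin i hi).
have H2 := ler_sum (index_enum 'I_p) (P := fun i => ~~ P i) (fun i hi => Hout i hi).
have e : \sum_(i | ~~ P i) (- bnorm h i + 2 * bnorm (x - z) i)
  = - \sum_(i | ~~ P i) bnorm h i + 2 * \sum_(i | ~~ P i) bnorm (x - z) i.
  by rewrite big_split /= sumrN mulr_sumr.
rewrite e in H2.
move: H1 H2 L; rewrite /P; lra.
Qed.

Lemma inf_bound (T : Type) (P : set T) (f : T -> R) a b C :
  0 < C -> (exists u, P u) -> (forall u, P u -> a <= b + C * f u) ->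
  a <= b + C * inf [set f u | u in P]%classic.
Proof.
move=> C0 [u0 Pu0] H.
have : (a - b) / C <= inf [set f u | u in P]%classic.
  apply: lb_le_inf; first by exists (f u0), u0.
  move=> y [u Pu <-]; rewrite ler_pdivrMr // mulrC; have := H u Pu; lra.
rewrite ler_pdivrMr //; lra.
Qed.

Lemma beta_le (q : \bar R) s m (A : 'M[R]_(m, p * n)) h :
  (0 < q)%E -> h != 0 -> kq q h <= s -> betaqs q s A <= l2norm (A *m h) / mnorm q h.
Proof.
move=> q0 hn0 hk; apply: ge_inf; last by exists h.
exists 0 => y [z _ <-]; apply: divr_ge0; [exact: l2norm_ge0 | exact: mnorm_ge0].
Qed.

Lemma beta_pos_n (q : \bar R) s m (A : 'M[R]_(m, p * n)) : 0 < betaqs q s A -> (0 < n)%N.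
Proof.
rewrite lt0n; apply: contraTneq => n0.
suff -> : betaqs q s A = 0 by rewrite ltxx.
rewrite /betaqs.
suff -> : [set l2norm (A *m z) / mnorm q z
      | z in [set z : 'cV[R]_(p * n) | z != 0 /\ kq q z <= s]]%classic = set0 by apply: inf0.
apply/seteqP; split => // y [z [zn0 _] _].
have [i] := nz_block zn0; rewrite /bnorm big1 ?sqrtr0 ?ltxx // => j _.
exfalso; move: (nat_of_ord j) (ltn_ord j) => jj; by rewrite n0.
Qed.

Lemma phi_nonempty (k : nat) : (0 < n)%N -> (k <= p)%N ->
  exists z : 'cV[R]_(p * n), mnorm0 z = k.
Proof.
move=> n0 kp.
exists (\col_(i0 < p * n) ((i0 < k * n)%N%:R : R)).
rewrite /mnorm0.
have -> : #|[pred i : 'I_p | blk (\col_(i0 < p * n) ((i0 < k * n)%N%:R : R)) i != 0]|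
        = #|codom (widen_ord kp)|.
  apply: eq_card => i; rewrite inE.
  apply/idP/codomP.
  - move=> H; have ik : (i < k)%N.
      rewrite ltnNge; apply/negP => ki; move/negP: H; apply; apply/eqP/rowP => j.
      rewrite !mxE /=; have -> : (i * n + j < k * n)%N = false by apply/negbTE; rewrite -leqNgt; nia.
      by [].
    by exists (Ordinal ik); apply: val_inj.
  - move=> [j ->]; apply/negP => /eqP H.
    have := congr1 (fun M : 'rV[R]_n => M 0 (Ordinal n0)) H; rewrite !mxE /=.
    have -> : (j * n + 0 < k * n)%N = true by have := ltn_ord j; nia.
    by move/eqP; rewrite oner_eq0.
rewrite card_codom ?card_ord // => a b /(congr1 val) /= ab; exact: val_inj.
Qed.

End Cone.

Lemma combine (R : realType) (T t c d kap X : R) : 0 <= kap -> kap < 1 -> 0 < c ->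
  0 <= t -> 0 <= d -> 0 <= X ->
  (1 - kap) * T <= 2 * c * t + 2 * d -> (T <= 4 / (1 - kap) * c * t -> t <= X) ->
  t <= X + c^-1 * d /\ T <= (1 - kap)^-1 * (2 * c * X) + 4 / (1 - kap) * d.
Proof.
move=> k0 k1 c0 t0 d0 X0 cone hA.
have k1p : 0 < 1 - kap by rewrite subr_gt0.
have -> : (1 - kap)^-1 * (2 * c * X) + 4 / (1 - kap) * d = (1 - kap)^-1 * (2 * c * X + 4 * d).
  by rewrite mulrDr; congr (_ + _); rewrite mulrAC mulrC.
rewrite ler_pdivlMl //.
have dc : 0 <= c^-1 * d by rewrite mulr_ge0 // invr_ge0 ltW.
have [HT|HT] := lerP T (4 / (1 - kap) * c * t).
  have tX := hA HT.
  have ctX : c * t <= c * X by rewrite ler_wpM2l // ltW.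
  split; first lra.
  move: cone ctX; rewrite -!mulrA; lra.
have HT' : 4 * (c * t) < (1 - kap) * T.
  have e : 4 / (1 - kap) * c * t = (1 - kap)^-1 * (4 * (c * t)) by ring.
  by move: HT; rewrite e ltr_pdivrMl.
have ctd : c * t <= d by move: cone HT'; rewrite -mulrA; lra.
have cX : 0 <= c * X by rewrite mulr_ge0 // ltW.
split.
  have : t <= c^-1 * d by rewrite ler_pdivlMl.
  lra.
move: cone HT' cX; rewrite -!mulrA; lra.
Qed.

Lemma lam_lemma (R : realType) (a b C : R) : 0 <= C ->
  (forall l, 0 < l -> l <= 1 -> a <= b + l * C) -> a <= b.
Proof.
move=> C0 H; rewrite leNgt; apply/negP => ab.
have ab0 : 0 < a - b by rewrite subr_gt0.
have den : 0 < a - b + C by lra.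
set l := (a - b) / (a - b + C).
have l0 : 0 < l by rewrite divr_gt0.
have l1 : l <= 1 by rewrite ler_pdivrMr // mul1r; lra.
have := H l l0 l1.
have : l * C < a - b.
  rewrite /l mulrAC ltr_pdivrMr // mulrDr; have := mulr_gt0 ab0 ab0; lra.
lra.
Qed.

Section Master.
Variables (R : realType) (p n : nat).
Implicit Types (x y z h w : 'cV[R]_(p * n)).

Lemma bnorm0 i : bnorm (0 : 'cV[R]_(p * n)) i = 0.
Proof. by rewrite /bnorm big1 ?sqrtr0 // => j _; rewrite mxE expr0n. Qed.

Lemma mnorm_0 (q : \bar R) : (0 < q)%E -> mnorm q (0 : 'cV[R]_(p * n)) = 0.
Proof.
case: q => [r||] //= r0.
  rewrite big1 ?powR0 // ?invr_eq0 ?gt_eqF // => i _.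
  by rewrite bnorm0 powR0 // gt_eqF.
apply: le_anti; rewrite mnorminf_ge0 andbT; apply: mnorminf_le => // i.
by rewrite bnorm0.
Qed.

Lemma master (q : \bar R) (k : nat) x h (kap a X : R) :
  (1 <= k <= p)%N -> (1 < q)%E -> 0 <= kap -> kap < 1 -> a = 4 / (1 - kap) -> 0 <= X ->
  (0 < n)%N ->
  mnorm1 (x + h) - mnorm1 x <= kap * mnorm1 h ->
  (h != 0 -> kq q h <= powR a (qcexp q) * k%:R ->
     mnorm1 h <= a * powR k%:R (1 - qinvexp q) * mnorm q h -> mnorm q h <= X) ->
  mnorm q h <= X + powR k%:R (qinvexp q - 1) * phik k x /\
  mnorm1 h <= (1 - kap)^-1 * (2 * powR k%:R (1 - qinvexp q) * X) + 4 / (1 - kap) * phik k x.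
Proof.
move=> /andP[k1 kp] q1 ka0 ka1 ae X0 n0 coneh hA.
have [e0 [ce s0]] := qexp_facts q1.
have k0 : 0 < (k%:R : R) by rewrite ltr0n.
set c := powR k%:R (1 - qinvexp q).
have c0 : 0 < c by apply: powR_gt0.
have -> : powR k%:R (qinvexp q - 1) = c^-1 by rewrite -powRN opprB.
have q0 : (0 < q)%E by apply: lt_trans q1.
have k1p : 0 < 1 - kap by rewrite subr_gt0.
have a0 : 0 < a by rewrite ae divr_gt0.
have per : forall z, mnorm0 z = k ->
   mnorm q h <= X + c^-1 * mnorm1 (x - z) /\
   mnorm1 h <= (1 - kap)^-1 * (2 * c * X) + 4 / (1 - kap) * mnorm1 (x - z).
  move=> z zk.
  apply: combine => //; first exact: mnorm_ge0.
  - exact: mnorm1_ge0.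
  - have := cone x h z.
    have hol := holder_blocks (fun i => blk z i != 0) h q1.
    have cardS : #|(fun i => blk z i != 0)| = k by rewrite -zk.
    rewrite cardS -/c in hol.
    have sp : mnorm1 h = \sum_(i | blk z i != 0) bnorm h i + \sum_(i | ~~ (blk z i != 0)) bnorm h i.
      by rewrite /mnorm1 (bigID (fun i => blk z i != 0)).
    move: coneh hol; rewrite sp mulrBl mul1r -mulrA.
    set S1 := \sum_(i | blk z i != 0) bnorm h i.
    lra.
  - move=> HT; have [->|hn0] := eqVneq h 0; first by rewrite mnorm_0.
    apply: hA => //; [apply: kq_le => //; by rewrite ae | by rewrite ae].
have [z0 z0k] := phi_nonempty R n0 kp.
split.
- apply: inf_bound; [by rewrite invr_gt0 | by exists z0 | move=> z /= zk; exact: (per z zk).1].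
- apply: inf_bound; [by rewrite divr_gt0 | by exists z0 | ].
  move=> z /= zk; exact: (per z zk).2.
Qed.

End Master.

Section Parts.
Variables (R : realType) (m p n : nat).

Lemma csq (k : nat) (q : \bar R) :
  powR k%:R (2 - 2 * qinvexp q) = powR k%:R (1 - qinvexp q) ^+ 2.
Proof.
have -> : 2 - 2 * qinvexp q = (1 - qinvexp q) * 2%:R by rewrite mulrBl mul1r mulrC.
by rewrite powRrM powR_mulrn // powR_ge0.
Qed.

Lemma part1 (A : 'M[R]_(m, p * n)) (x : 'cV[R]_(p * n)) (eps : 'cV[R]_m) (k : nat) (q : \bar R)
    (zeta : R) :
  (1 <= k <= p)%N -> (1 < q)%E -> 0 <= zeta ->
   l2norm eps <= zeta ->
   forall xh, bbp_solution A (A *m x + eps) zeta xh ->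
   0 < betaqs q (powR 4 (qcexp q) * k%:R) A ->
     mnorm q (xh - x) <= 2 * zeta / betaqs q (powR 4 (qcexp q) * k%:R) A
                         + powR k%:R (qinvexp q - 1) * phik k x
     /\ mnorm1 (xh - x) <= 4 * powR k%:R (1 - qinvexp q) * zeta
                             / betaqs q (powR 4 (qcexp q) * k%:R) A
                           + 4 * phik k x.
Proof.
move=> kk q1 z0 epsz xh [feas opt] bpos.
set be := betaqs q (powR 4 (qcexp q) * k%:R) A in bpos *.
have n0 := beta_pos_n bpos.
have q0 : (0 < q)%E by apply: lt_trans q1.
set h := xh - x.
have xhE : xh = x + h by rewrite /h addrC subrK.
have coneh : mnorm1 (x + h) - mnorm1 x <= 0 * mnorm1 h.
  rewrite mul0r subr_le0 -xhE; apply: opt.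
  by have -> : A *m x + eps - A *m x = eps by rewrite addrC addKr.
have X0 : 0 <= 2 * zeta / be by rewrite divr_ge0 // ?mulr_ge0 // ltW.
have a4 : (4 : R) = 4 / (1 - 0) by rewrite subr0 divr1.
have := @master R p n q k x h 0 4 (2 * zeta / be) kk q1 (lexx 0) ltr01 a4 X0 n0 coneh.
case.
- move=> hn0 hk _.
  have bl := beta_le A q0 hn0 hk.
  have t0 := mnorm_gt0 q0 hn0.
  rewrite ler_pdivlMr // mulrC.
  rewrite ler_pdivlMr // in bl.
  apply: (le_trans bl).
  have e : A *m h = eps - (A *m x + eps - A *m xh).
    rewrite /h mulmxBr; apply/matrixP => i j; rewrite !mxE; ring.
  rewrite e; apply: (le_trans (l2normD _ _)); rewrite l2normN; lra.
move=> H1 H2; split; first exact: H1.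
apply: (le_trans H2); rewrite subr0 invr1 mul1r ?divr1.
set c := powR k%:R (1 - qinvexp q).
have -> : 2 * c * (2 * zeta / be) + 4 * 1 * phik k x = 4 * c * zeta / be + 4 * phik k x by ring.
by [].
Qed.


Lemma ATAh_bound (A : 'M[R]_(m, p * n)) (x xh : 'cV[R]_(p * n)) (eps : 'cV[R]_m) mu :
  mnorminf (A^T *m eps) <= mu -> mnorminf (A^T *m (A *m x + eps - A *m xh)) <= mu ->
  mnorminf (A^T *m (A *m (xh - x))) <= 2 * mu.
Proof.
move=> h1 h2.
have mu0 : 0 <= mu by apply: le_trans h1; apply: mnorminf_ge0.
have e : A^T *m (A *m (xh - x)) = A^T *m eps - A^T *m (A *m x + eps - A *m xh).
  rewrite -mulmxBr; congr (_ *m _); rewrite mulmxBr; apply/matrixP => i j; rewrite !mxE; ring.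
rewrite e; apply: mnorminf_le; first by rewrite mulr_ge0.
move=> i; apply: (le_trans (bnormB _ _ _)).
have := bnorm_le_inf (A^T *m eps) i; have := bnorm_le_inf (A^T *m (A *m x + eps - A *m xh)) i.
lra.
Qed.

Lemma part2 (A : 'M[R]_(m, p * n)) (x : 'cV[R]_(p * n)) (eps : 'cV[R]_m) (k : nat) (q : \bar R)
    (mu : R) :
  (1 <= k <= p)%N -> (1 < q)%E -> 0 < mu ->
   mnorminf (A^T *m eps) <= mu ->
   forall xh, bds_solution A (A *m x + eps) mu xh ->
   0 < betaqs q (powR 4 (qcexp q) * k%:R) A ->
     mnorm q (xh - x) <= 8 * powR k%:R (1 - qinvexp q)
                           / betaqs q (powR 4 (qcexp q) * k%:R) A ^+ 2 * mu
                         + powR k%:R (qinvexp q - 1) * phik k x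
     /\ mnorm1 (xh - x) <= 16 * powR k%:R (2 - 2 * qinvexp q)
                             / betaqs q (powR 4 (qcexp q) * k%:R) A ^+ 2 * mu
                           + 4 * phik k x.
Proof.
move=> kk q1 mu0 epsz xh [feas opt] bpos.
set be := betaqs q (powR 4 (qcexp q) * k%:R) A in bpos *.
rewrite csq.
set c := powR k%:R (1 - qinvexp q).
have k0 : 0 < (k%:R : R) by case/andP: kk => k1 _; rewrite ltr0n.
have c0 : 0 < c by apply: powR_gt0.
have n0 := beta_pos_n bpos.
have q0 : (0 < q)%E by apply: lt_trans q1.
have ATAh := ATAh_bound epsz feas.
set h := xh - x in ATAh *.
have xhE : xh = x + h by rewrite /h addrC subrK.
have coneh : mnorm1 (x + h) - mnorm1 x <= 0 * mnorm1 h.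
  rewrite mul0r subr_le0 -xhE; apply: opt.
  by have -> : A *m x + eps - A *m x = eps by rewrite addrC addKr.
have be2 : 0 < be ^+ 2 by rewrite exprn_gt0.
have X0 : 0 <= 8 * c / be ^+ 2 * mu by rewrite !mulr_ge0 ?invr_ge0 // ltW.
have a4 : (4 : R) = 4 / (1 - 0) by rewrite subr0 divr1.
have := @master R p n q k x h 0 4 (8 * c / be ^+ 2 * mu) kk q1 (lexx 0) ltr01 a4 X0 n0 coneh.
case.
- move=> hn0 hk HT.
  have bl := beta_le A q0 hn0 hk.
  have t0 := mnorm_gt0 q0 hn0.
  rewrite ler_pdivlMr // in bl.
  set t := mnorm q h in bl HT t0 *.
  set N := l2norm (A *m h) in bl.
  have b2 : (be * t) ^+ 2 <= N ^+ 2.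
    by rewrite ler_pXn2r ?nnegrE ?mulr_ge0 ?l2norm_ge0 // ltW.
  have N2 : N ^+ 2 <= mnorm1 h * (2 * mu).
    rewrite /N l2norm_sq ip_mul; apply: (le_trans (ip_blocks _ _)).
    by rewrite ler_wpM2l ?mnorm1_ge0.
  have HT' : mnorm1 h * (2 * mu) <= 4 * c * t * (2 * mu).
    by rewrite ler_wpM2r // mulr_ge0 // ltW.
  have : be ^+ 2 * t * t <= 8 * c * mu * t.
    have -> : be ^+ 2 * t * t = (be * t) ^+ 2 by ring.
    have -> : 8 * c * mu * t = 4 * c * t * (2 * mu) by ring.
    lra.
  rewrite ler_pM2r // => h3.
  rewrite -mulrAC ler_pdivlMr // mulrC; lra.
move=> H1 H2; split; first exact: H1.
apply: (le_trans H2); rewrite subr0 invr1 mul1r ?divr1.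
have -> : 2 * c * (8 * c / be ^+ 2 * mu) + 4 * 1 * phik k x
   = 16 * c ^+ 2 / be ^+ 2 * mu + 4 * phik k x by ring.
by [].
Qed.


Lemma lasso_key (A : 'M[R]_(m, p * n)) (x : 'cV[R]_(p * n)) (eps : 'cV[R]_m) mu xh :
  0 < mu -> glasso_solution A (A *m x + eps) mu xh ->
  mu * (mnorm1 xh - mnorm1 x) <= ip (xh - x) (A^T *m eps) - l2norm (A *m (xh - x)) ^+ 2.
Proof.
move=> mu0 gl.
set h := xh - x; set y := A *m x + eps; set r := y - A *m xh.
have re : r = eps - A *m h.
  rewrite /r /y /h mulmxBr; apply/matrixP => i j; rewrite !mxE; ring.
set N2 := l2norm (A *m h) ^+ 2; set G := ip h (A^T *m eps).
have N20 : 0 <= N2 by rewrite /N2 exprn_ge0 // l2norm_ge0.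
have Ir : ip r (A *m h) = G - N2.
  by rewrite re ipDl ipNl /N2 l2norm_sq ipC ip_mul.
apply: (@lam_lemma _ _ _ (2^-1 * N2)); first by rewrite mulr_ge0 // invr_ge0 ler0n.
move=> l l0 l1.
have g := gl (xh - l *: h).
have e1 : y - A *m (xh - l *: h) = r + l *: (A *m h).
  rewrite /r mulmxBr -scalemxAr; apply/matrixP => i j; rewrite !mxE; ring.
have e2 : l2norm (r + l *: (A *m h)) ^+ 2 = l2norm r ^+ 2 + 2 * l * (G - N2) + l ^+ 2 * N2.
  clearbody r G; rewrite !l2norm_sq !ipDl !ipDr !ipZl !ipZr [ip (A *m h) r]ipC Ir /N2 l2norm_sq; ring.
have e3 : mnorm1 (xh - l *: h) <= (1 - l) * mnorm1 xh + l * mnorm1 x.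
  have -> : xh - l *: h = (1 - l) *: xh + l *: x.
    by rewrite /h; apply/matrixP => i j; rewrite !mxE; ring.
  apply: (le_trans (mnorm1D _ _)); rewrite !mnorm1Z !ger0_norm //; [exact: ltW | by rewrite subr_ge0].
have e3' := ler_wpM2l (ltW mu0) e3.
rewrite e1 e2 in g.
suff : l * (mu * (mnorm1 xh - mnorm1 x)) <= l * (G - N2 + l * (2^-1 * N2)) by rewrite ler_pM2l.
move: g e3'; lra.
Qed.


Lemma mnorm1N (h : 'cV[R]_(p * n)) : mnorm1 (- h) = mnorm1 h.
Proof. by apply: eq_bigr => i _; rewrite bnormN. Qed.

Lemma part3 (A : 'M[R]_(m, p * n)) (x : 'cV[R]_(p * n)) (eps : 'cV[R]_m) (k : nat) (q : \bar R)
    (mu : R) :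
  (1 <= k <= p)%N -> (1 < q)%E -> 0 < mu ->
   forall kappa, 0 < kappa < 1 ->
   mnorminf (A^T *m eps) <= kappa * mu ->
   forall xh, glasso_solution A (A *m x + eps) mu xh ->
   0 < betaqs q (powR (4 / (1 - kappa)) (qcexp q) * k%:R) A ->
     mnorm q (xh - x) <= (1 + kappa) / (1 - kappa)
                         * (4 * powR k%:R (1 - qinvexp q)
                            / betaqs q (powR (4 / (1 - kappa)) (qcexp q) * k%:R) A ^+ 2)
                         * mu
                         + powR k%:R (qinvexp q - 1) * phik k x
     /\ mnorm1 (xh - x) <= (1 + kappa) / (1 - kappa) ^+ 2
                           * (8 * powR k%:R (2 - 2 * qinvexp q)
                              / betaqs q (powR (4 / (1 - kappa)) (qcexp q) * k%:R) A ^+ 2)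
                           * mu
                           + 4 / (1 - kappa) * phik k x.
Proof.
move=> kk q1 mu0 kap /andP[ka0 ka1] epsz xh gl bpos.
set be := betaqs q (powR (4 / (1 - kap)) (qcexp q) * k%:R) A in bpos *.
rewrite csq.
set c := powR k%:R (1 - qinvexp q).
have k0 : 0 < (k%:R : R) by case/andP: kk => k1 _; rewrite ltr0n.
have c0 : 0 < c by apply: powR_gt0.
have n0 := beta_pos_n bpos.
have q0 : (0 < q)%E by apply: lt_trans q1.
have key := lasso_key mu0 gl.
set h := xh - x in key *.
have xhE : xh = x + h by rewrite /h addrC subrK.
set T := mnorm1 h.
set N2 := l2norm (A *m h) ^+ 2 in key.
have N20 : 0 <= N2 by rewrite /N2 exprn_ge0 // l2norm_ge0.
have Gb : ip h (A^T *m eps) <= T * (kap * mu).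
  apply: (le_trans (ip_blocks _ _)); apply: ler_wpM2l => //; exact: mnorm1_ge0.
have k1p : 0 < 1 - kap by rewrite subr_gt0.
have coneh : mnorm1 (x + h) - mnorm1 x <= kap * T.
  rewrite -xhE -(ler_pM2l mu0); move: key Gb; rewrite -/T; lra.
have xT : mnorm1 x - mnorm1 xh <= T.
  have := mnorm1D (x + h) (- h); rewrite addrK mnorm1N -xhE -/T; lra.
have be2 : 0 < be ^+ 2 by rewrite exprn_gt0.
have X0 : 0 <= (1 + kap) / (1 - kap) * (4 * c / be ^+ 2) * mu.
  have k1 : 0 <= 1 + kap by lra.
  by rewrite !mulr_ge0 ?invr_ge0 // ltW.
have := @master R p n q k x h kap (4 / (1 - kap)) _ kk q1 (ltW ka0) ka1 erefl X0 n0 coneh.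
case.
- move=> hn0 hk HT.
  have bl := beta_le A q0 hn0 hk.
  have t0 := mnorm_gt0 q0 hn0.
  rewrite ler_pdivlMr // in bl.
  set t := mnorm q h in bl HT t0 *.
  have b2 : (be * t) ^+ 2 <= N2.
    by rewrite /N2 ler_pXn2r ?nnegrE ?mulr_ge0 ?l2norm_ge0 // ltW.
  have N2b : N2 <= (1 + kap) * mu * T.
    have : mu * (mnorm1 x - mnorm1 xh) <= mu * T by rewrite ler_pM2l.
    move: key Gb; rewrite -/T; lra.
  have HT' : (1 + kap) * mu * T <= (1 + kap) * mu * (4 / (1 - kap) * c * t).
    by rewrite ler_wpM2l // mulr_ge0 ?addr_ge0 // ltW.
  have : be ^+ 2 * t * t <= ((1 + kap) / (1 - kap) * (4 * c) * mu) * t.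
    have -> : be ^+ 2 * t * t = (be * t) ^+ 2 by ring.
    have -> : ((1 + kap) / (1 - kap) * (4 * c) * mu) * t
       = (1 + kap) * mu * (4 / (1 - kap) * c * t) by ring.
    lra.
  rewrite ler_pM2r // => h3.
  have -> : (1 + kap) / (1 - kap) * (4 * c / be ^+ 2) * mu
     = ((1 + kap) / (1 - kap) * (4 * c) * mu) / be ^+ 2 by ring.
  rewrite ler_pdivlMr // mulrC; lra.
move=> H1 H2; split; first exact: H1.
apply: (le_trans H2).
have -> : (1 - kap)^-1 * (2 * c * ((1 + kap) / (1 - kap) * (4 * c / be ^+ 2) * mu))
   = (1 + kap) / (1 - kap) ^+ 2 * (8 * c ^+ 2 / be ^+ 2) * mu.
  by rewrite -!exprVn; ring.
by [].
Qed.

End Parts.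

Unset Implicit Arguments.

Theorem theorem2 (R : realType) (m p n : nat) (A : 'M[R]_(m, p * n))
    (x : 'cV[R]_(p * n)) (eps : 'cV[R]_m) (k : nat) (q : \bar R)
    (zeta mu : R) :
  (1 <= k <= p)%N -> (1 < q)%E -> 0 <= zeta -> 0 < mu ->
  [/\
   (* 1) block basis pursuit *)
   l2norm eps <= zeta ->
   forall xh, bbp_solution A (A *m x + eps) zeta xh ->
   0 < betaqs q (powR 4 (qcexp q) * k%:R) A ->
     mnorm q (xh - x) <= 2 * zeta / betaqs q (powR 4 (qcexp q) * k%:R) A
                         + powR k%:R (qinvexp q - 1) * phik k x
     /\ mnorm1 (xh - x) <= 4 * powR k%:R (1 - qinvexp q) * zeta
                             / betaqs q (powR 4 (qcexp q) * k%:R) A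
                           + 4 * phik k x,
   (* 2) block Dantzig selector *)
   mnorminf (A^T *m eps) <= mu ->
   forall xh, bds_solution A (A *m x + eps) mu xh ->
   0 < betaqs q (powR 4 (qcexp q) * k%:R) A ->
     mnorm q (xh - x) <= 8 * powR k%:R (1 - qinvexp q)
                           / betaqs q (powR 4 (qcexp q) * k%:R) A ^+ 2 * mu
                         + powR k%:R (qinvexp q - 1) * phik k x
     /\ mnorm1 (xh - x) <= 16 * powR k%:R (2 - 2 * qinvexp q)
                             / betaqs q (powR 4 (qcexp q) * k%:R) A ^+ 2 * mu
                           + 4 * phik k x
   &
   (* 3) group lasso *)
   forall kappa, 0 < kappa < 1 ->
   mnorminf (A^T *m eps) <= kappa * mu ->
   forall xh, glasso_solution A (A *m x + eps) mu xh ->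
   0 < betaqs q (powR (4 / (1 - kappa)) (qcexp q) * k%:R) A ->
     mnorm q (xh - x) <= (1 + kappa) / (1 - kappa)
                         * (4 * powR k%:R (1 - qinvexp q)
                            / betaqs q (powR (4 / (1 - kappa)) (qcexp q) * k%:R) A ^+ 2)
                         * mu
                         + powR k%:R (qinvexp q - 1) * phik k x
     /\ mnorm1 (xh - x) <= (1 + kappa) / (1 - kappa) ^+ 2
                           * (8 * powR k%:R (2 - 2 * qinvexp q)
                              / betaqs q (powR (4 / (1 - kappa)) (qcexp q) * k%:R) A ^+ 2)
                           * mu
                           + 4 / (1 - kappa) * phik k x].
Proof.
move=> kk q1 z0 mu0; split.
- move=> epsz xh sol bpos; have H := part1 kk q1 z0 epsz sol bpos; exact H.
- move=> epsz xh sol bpos; have H := part2 kk q1 mu0 epsz sol bpos; exact H.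
- move=> kap hk epsz xh gl bpos; have H := part3 kk q1 mu0 hk epsz gl bpos; exact H.
Qed.
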